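(* For every state $\rho\in\mathsf{St}(S)$, $\mathsf A_w(\rho)\ge \dfrac{\mathsf A_r(\rho)}{d-1}$.
   Context: $S$ is a $d$-dimensional quantum system ($d\ge2$) with non-degenerate Hamiltonian $H=\sum_i E_i|i\rangle\langle i|$, $E_1<\dots<E_d$. $\mathsf{St}(S)$ is the set of density matrices; $\mathsf P(S)$ is the set of passive states, i.e. states $\sum_i p_i|i\rangle\langle i|$ with $p_1\ge\dots\ge p_d$. Activity weight: $\mathsf A_w(\rho)=\min\{t\ge0:\ \rho=t\sigma+(1-t)\tau,\ \sigma\in\mathsf{St}(S),\ \tau\in\mathsf P(S)\}$. Robustness of activity: $\mathsf A_r(\rho)=\min\{t\ge0:\ \exists\sigma\in\mathsf{St}(S),\ (\rho+t\sigma)/(1+t)\in\mathsf P(S)\}$. *)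

(* Defs.v *)
From HB Require Import structures.
From mathcomp Require Import all_boot all_order all_algebra.
From mathcomp Require Import classical_sets reals.
From mathcomp Require Import complex.
Set Implicit Arguments. Unset Strict Implicit. Unset Printing Implicit Defensive.
Import Order.TTheory GRing.Theory Num.Theory.
Local Open Scope ring_scope.
Local Open Scope classical_set_scope.
Local Open Scope complex_scope.

Section Defs.
Variables (R : realType) (d : nat).
Local Notation C := R[i].

Definition adj (A : 'M[C]_d) : 'M[C]_d := (map_mx Num.conj A)^T.

(* positive semidefinite (over C, this forces Hermitian) *)
Definition psd (A : 'M[C]_d) : Prop :=
  A = adj A /\
  forall v : 'cV[C]_d, 0 <= ((map_mx Num.conj v)^T *m A *m v) 0 0.

Definition is_state (A : 'M[C]_d) : Prop := psd A /\ \tr A = 1.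

(* P(S): passive states for H = sum_i E_i |i><i| (standard basis = energy
   eigenbasis): diagonal in the energy basis with populations non-increasing
   in energy. *)
Definition is_passive (E : 'I_d -> R) (A : 'M[C]_d) : Prop :=
  is_state A /\
  exists p : 'I_d -> R,
    A = diag_mx (\row_i ((p i)%:C)) /\
    (forall i j : 'I_d, E i <= E j -> p j <= p i).

Definition activity_weight (E : 'I_d -> R) (rho : 'M[C]_d) : R :=
  inf [set t : R | 0 <= t /\ exists sigma tau : 'M[C]_d,
         is_state sigma /\ is_passive E tau /\
         rho = (t%:C) *: sigma + ((1 - t)%:C) *: tau].

Definition activity_robustness (E : 'I_d -> R) (rho : 'M[C]_d) : R :=
  inf [set t : R | 0 <= t /\ exists sigma : 'M[C]_d,
         is_state sigma /\
         is_passive E (((1 + t)%:C)^-1 *: (rho + (t%:C) *: sigma))].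

End Defs.

(* Main.v *)
Require Import Defs.
From HB Require Import structures.
From mathcomp Require Import all_boot all_order all_algebra.
From mathcomp Require Import classical_sets reals.
From mathcomp Require Import complex.
From mathcomp Require Import ring lra.
Import Order.TTheory GRing.Theory Num.Theory.
Local Open Scope ring_scope.
Local Open Scope complex_scope.

Section Aux.
Variables (R : realType) (d : nat).
Local Notation C := R[i].

Definition qf (A : 'M[C]_d) (v : 'cV[C]_d) : C :=
  ((map_mx Num.conj v)^T *m A *m v) 0 0.

Lemma conjR (x : R) : Num.conj (x%:C) = x%:C.
Proof. by apply: conj_Creal; rewrite complex_real. Qed.

Lemma sum_delta (f : 'I_d -> C) i : \sum_l (l == i)%:R * f l = f i.
Proof.
rewrite (bigD1 i) //= eqxx mul1r big1 ?addr0 // => l /negbTE ->.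
by rewrite mul0r.
Qed.

Lemma qfE A v : qf A v = \sum_j \sum_i Num.conj (v i 0) * A i j * v j 0.
Proof.
rewrite /qf !mxE; apply: eq_bigr => j _; rewrite !mxE mulr_suml.
by apply: eq_bigr => i _; rewrite !mxE.
Qed.

Lemma psd_le_tr (A : 'M[C]_d) : psd A -> forall v,
  qf A v <= \tr A * \sum_i Num.conj (v i 0) * v i 0.
Proof.
move=> [_ pos] v.
pose c i := v i 0.
have key i j : 0 <= c j * Num.conj (c j) * A i i
   - Num.conj (c i) * A i j * c j - Num.conj (c j) * A j i * c i
   + c i * Num.conj (c i) * A j j.
  pose w := \col_k (Num.conj (c j) * (k == i)%:R - Num.conj (c i) * (k == j)%:R).
  have := pos w; rewrite -/(qf A w) qfE.
  have E1 l : \sum_k Num.conj (w k 0) * A k l * w l 0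
      = (c j * A i l - c i * A j l) * w l 0.
    transitivity (\sum_k ((k == i)%:R * (c j * A k l * w l 0)
                        - (k == j)%:R * (c i * A k l * w l 0))).
      apply: eq_bigr => k _; rewrite [w k 0]mxE rmorphB !rmorphM !rmorph_nat /= !conjCK.
      ring.
    by rewrite sumrB !(sum_delta (fun k => _ * A k l * _)); ring.
  under eq_bigr do rewrite E1.
  have -> : \sum_l (c j * A i l - c i * A j l) * w l 0 =
     \sum_l ((l == i)%:R * ((c j * A i l - c i * A j l) * Num.conj (c j))
           - (l == j)%:R * ((c j * A i l - c i * A j l) * Num.conj (c i))).
    by apply: eq_bigr => l _; rewrite mxE; ring.
  rewrite sumrB !(sum_delta (fun l => (c j * A i l - c i * A j l) * _)).
  by congr (0 <= _); ring.
have S : 0 <= \sum_i \sum_j (c j * Num.conj (c j) * A i i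
   - Num.conj (c i) * A i j * c j - Num.conj (c j) * A j i * c i
   + c i * Num.conj (c i) * A j j).
  by apply: sumr_ge0 => i _; apply: sumr_ge0 => j _; apply: key.
move: S; under eq_bigr => i _ do rewrite big_split !sumrB.
rewrite big_split !sumrB /= => S.
set N := \sum_i _.
have T3 : \sum_i \sum_j Num.conj (c j) * A j i * c i = qf A v by rewrite qfE.
have T2 : \sum_i \sum_j Num.conj (c i) * A i j * c j = qf A v.
  by rewrite exchange_big.
have T1 : \sum_i \sum_j c j * Num.conj (c j) * A i i = \tr A * N.
  rewrite /mxtrace mulr_suml; apply: eq_bigr => i _.
  rewrite mulrC mulr_suml; apply: eq_bigr => j _; rewrite /c; ring.
have T4 : \sum_i \sum_j c i * Num.conj (c i) * A j j = \tr A * N.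
  rewrite /mxtrace /N mulr_sumr; apply: eq_bigr => i _.
  rewrite -mulr_sumr /c; ring.
rewrite T1 T2 T3 T4 in S.
rewrite -subr_ge0; have -> : \tr A * N - qf A v =
  (\tr A * N - qf A v - qf A v + \tr A * N) / 2 by field.
by apply: divr_ge0 => //; apply: ler0n.
Qed.


Lemma adjD (A B : 'M[C]_d) : adj (A + B) = adj A + adj B.
Proof. by apply/matrixP => i j; rewrite !mxE rmorphD. Qed.
Lemma adjN (A : 'M[C]_d) : adj (- A) = - adj A.
Proof. by apply/matrixP => i j; rewrite !mxE rmorphN. Qed.
Lemma adjZR (x : R) (A : 'M[C]_d) : adj (x%:C *: A) = x%:C *: adj A.
Proof. by apply/matrixP => i j; rewrite !mxE rmorphM /= conjR. Qed.
Lemma adj1 : adj (1%:M : 'M[C]_d) = 1%:M.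
Proof. by apply/matrixP => i j; rewrite !mxE rmorph_nat eq_sym. Qed.

Lemma qfD (A B : 'M[C]_d) v : qf (A + B) v = qf A v + qf B v.
Proof. by rewrite /qf mulmxDr mulmxDl mxE. Qed.
Lemma qfN (A : 'M[C]_d) v : qf (- A) v = - qf A v.
Proof. by rewrite /qf mulmxN mulNmx mxE. Qed.
Lemma qfZ a (A : 'M[C]_d) v : qf (a *: A) v = a * qf A v.
Proof. by rewrite /qf -scalemxAr -scalemxAl mxE. Qed.
Lemma qf1 v : qf 1%:M v = \sum_i Num.conj (v i 0) * v i 0.
Proof.
rewrite qfE; apply: eq_bigr => j _.
rewrite -(sum_delta (fun i => Num.conj (v i 0) * v j 0) j).
by apply: eq_bigr => i _; rewrite mxE; ring.
Qed.

Lemma psd_add (A B : 'M[C]_d) : psd A -> psd B -> psd (A + B).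
Proof.
move=> [hA pA] [hB pB]; split; first by rewrite adjD -hA -hB.
by move=> v; rewrite -/(qf _ v) qfD; apply: addr_ge0; [apply: pA | apply: pB].
Qed.
Lemma psd_scale (x : R) (A : 'M[C]_d) : 0 <= x -> psd A -> psd (x%:C *: A).
Proof.
move=> hx [hA pA]; split; first by rewrite adjZR -hA.
by move=> v; rewrite -/(qf _ v) qfZ mulr_ge0 // ?lecR // pA.
Qed.
Lemma psd1 : psd (1%:M : 'M[C]_d).
Proof.
split; first by rewrite adj1.
move=> v; rewrite -/(qf _ v) qf1; apply: sumr_ge0 => i _.
by rewrite mulrC mul_conjC_ge0.
Qed.
Lemma psd_sub_state (S : 'M[C]_d) : is_state S -> psd (1%:M - S).
Proof.
move=> [[hS pS] trS]; split; first by rewrite adjD adjN adj1 -hS.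
move=> v; rewrite -/(qf _ v) qfD qfN qf1 subr_ge0.
by have := @psd_le_tr S (conj hS pS) v; rewrite trS mul1r.
Qed.

Lemma passive_comb E (q : 'I_d -> R) (tau : 'M[C]_d) (a b : R) :
  tau = diag_mx (\row_i (q i)%:C) -> psd tau ->
  (forall i j, E i <= E j -> q j <= q i) ->
  0 <= a -> 0 <= b -> (a * d%:R)%:C + b%:C * \tr tau = 1 ->
  is_passive E (a%:C *: 1%:M + b%:C *: tau).
Proof.
move=> htau ptau hq ha hb htr; split; first split.
- by apply: psd_add; apply: psd_scale => //; apply: psd1.
- by rewrite mxtraceD !mxtraceZ mxtrace_scalar -[RHS]htr rmorphM /= rmorph_nat.
exists (fun i => a + b * q i); split.
  apply/matrixP => i j; rewrite htau !mxE rmorphD rmorphM /=.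
  by case: (i == j); rewrite /= ?mulr1n ?mulr0n; ring.
move=> i j /hq h; rewrite lerD2l; exact: ler_wpM2l.
Qed.


Lemma tau0_diag : ((0:R)%:C *: 1%:M : 'M[C]_d) = diag_mx (\row_i ((fun _ : 'I_d => (0:R)) i)%:C).
Proof. by apply/matrixP => i j; rewrite !mxE mul0r mul0rn. Qed.

Lemma rob_le E (rho : 'M[C]_d) (t : R) sigma tau q :
  0 <= t -> t <= 1 -> (2 <= d)%N -> is_state sigma ->
  tau = diag_mx (\row_i (q i)%:C) -> psd tau ->
  (forall i j, E i <= E j -> q j <= q i) ->
  (1 - t)%:C * \tr tau = (1 - t)%:C ->
  rho = t%:C *: sigma + (1 - t)%:C *: tau ->
  activity_robustness E rho <= (d%:R - 1) * t.
Proof.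
move=> t0 t1 d2 hsig htau ptau hq htr hrho.
have hd : 0 < d%:R - 1 :> R by rewrite subr_gt0 ltr1n.
have hs : 0 < 1 + (d%:R - 1) * t :> R.
  by apply: (lt_le_trans ltr01); rewrite lerDl mulr_ge0 // ltW.
apply: ge_inf; first by exists 0 => y [].
split; first by rewrite mulr_ge0 // ltW.
exists (((d%:R - 1)^-1)%:C *: (1%:M - sigma)); split.
  split; first by apply: psd_scale; [rewrite invr_ge0 ltW | apply: psd_sub_state].
  rewrite mxtraceZ raddfB /= mxtrace_scalar (proj2 hsig).
  have -> : (1 *+ d : C) - 1 = (d%:R - 1 : R)%:C by rewrite rmorphB rmorph_nat rmorph1.
  by rewrite -rmorphM mulVf ?rmorph1 // gt_eqF.
have -> : ((1 + (d%:R - 1) * t)%:C)^-1 *: (rho + ((d%:R - 1) * t)%:C *: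
      (((d%:R - 1)^-1)%:C *: (1%:M - sigma))) =
    (t / (1 + (d%:R - 1) * t))%:C *: 1%:M + ((1 - t) / (1 + (d%:R - 1) * t))%:C *: tau.
  have n1 : (d%:R - 1 : C) != 0.
    have h : (d%:R - 1 : R)%:C != 0 by rewrite fmorph_eq0 gt_eqF.
    by move: h; rewrite rmorphB rmorph_nat rmorph1.
  have n2 : (1 + (d%:R - 1) * t%:C : C) != 0.
    have h : (1 + (d%:R - 1) * t : R)%:C != 0 by rewrite fmorph_eq0 gt_eqF.
    by move: h; rewrite rmorphD rmorphM rmorphB rmorph_nat rmorph1.
  apply/matrixP => i j; rewrite hrho !mxE.
  rewrite !(rmorphM, rmorphD, rmorphB, rmorphN, fmorphV, rmorph1, rmorph_nat) /=.
  by field; rewrite n1 andbT; exact: n2.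
apply: (passive_comb _ _ _ _ _ htau ptau hq).
- by rewrite divr_ge0 // ltW.
- by rewrite divr_ge0 ?subr_ge0 // ltW.
rewrite [((1 - t) / _)%:C]rmorphM [X in _ + X]mulrAC /= htr -rmorphM -rmorphD.
have -> : t / (1 + (d%:R - 1) * t) * d%:R + (1 - t) / (1 + (d%:R - 1) * t) = 1.
  by field; rewrite gt_eqF.
by rewrite rmorph1.
Qed.

End Aux.

Theorem mainTheorem10 (R : realType) (d : nat) (E : 'I_d -> R) (rho : 'M[R[i]]_d) :
  (2 <= d)%N ->
  (forall i j : 'I_d, (i < j)%N -> E i < E j) ->
  is_state rho ->
  activity_robustness E rho / (d%:R - 1) <= activity_weight E rho.
Proof.
move=> d2 _ hrho.
have hd : 0 < d%:R - 1 :> R by rewrite subr_gt0 ltr1n.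
have hd0 : 0 < d%:R :> R by rewrite ltr0n; exact: ltnW.
have ptau0 : psd ((0:R)%:C *: 1%:M : 'M[R[i]]_d) by apply: psd_scale => //; apply: psd1.
have bound1 : activity_robustness E rho <= (d%:R - 1) * 1.
  apply: (@rob_le R d E rho 1 rho _ (fun _ => 0)) => //.
  - by rewrite -tau0_diag.
  - by rewrite subrr rmorph0 !mul0r.
  - by rewrite subrr rmorph0 scale0r addr0 rmorph1 scale1r.
apply: lb_le_inf.
  exists 1; split => //.
  exists rho, ((d%:R^-1)%:C *: 1%:M + (0:R)%:C *: ((0:R)%:C *: 1%:M)); split => //; split.
    apply: (@passive_comb R d E (fun _ => 0)) => //.
    - exact: tau0_diag.
    - by rewrite invr_ge0 ltW.
    - by rewrite rmorph0 mul0r addr0 mulVf ?rmorph1 // gt_eqF.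
  by rewrite subrr rmorph0 scale0r addr0 rmorph1 scale1r.
move=> t [t0 [sig [tau [hs [[[ptau trtau] [q [hq hmon]]] hr]]]]].
rewrite ler_pdivrMr //.
case: (leP t 1) => ht1.
  rewrite mulrC; apply: (@rob_le R d E rho t sig tau q) => //.
  by rewrite trtau mulr1.
apply: (le_trans bound1); rewrite mulr1 mulrC ler_peMr ?ltW //.
Qed.
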